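(* Let $N,M\ge 0$ be integers, let $A_0,\dots,A_N$ and $B_0,\dots,B_M$ be rational numbers with $B_0\neq 0$, and consider the Diophantine equation $$\sum_{i=0}^N A_i\big(Z_i^5+{Z'_{i+1}}^5\big)=\sum_{i=0}^M B_i\big(W_i^3+{W'_{i+1}}^3\big)\qquad(\ast\ast)$$ in the unknowns $Z_i,Z'_{i+1}$ $(0\le i\le N)$, $W_i,W'_{i+1}$ $(0\le i\le M)$. Fix rational numbers $x_0,\dots,x_N$ and $y_1,\dots,y_M$, and let $C$ be the quartic curve $$v^2=\Big(\frac{\sum_{i=0}^N A_i}{3B_0}\Big)t^4+\Big(\frac{10\sum_{i=0}^N A_ix_i^2-\sum_{i=0}^M B_i}{3B_0}\Big)t^2+\frac{5\sum_{i=0}^N A_ix_i^4-3\sum_{i=1}^M B_iy_i^2}{3B_0}.$$ Then for every rational point $(t,v)$ of $C$, setting $y_0=v$, the tuple $Z_i=t+x_i$, $Z'_{i+1}=t-x_i$ $(0\le i\le N)$, $W_i=t+y_i$, $W'_{i+1}=t-y_i$ $(0\le i\le M)$ is a rational solution of $(\ast\ast)$. Moreover, if $(\ast\ast)$ has a rational solution then, multiplying all $Z$-variables by $\mu^3$ and all $W$-variables by $\mu^5$ for a suitable integer $\mu$, one obtains an integer solution; hence if $C$ has infinitely many rational points (e.g. it has a rational point and is birational to an elliptic curve of positive rank), then $(\ast\ast)$ has infinitely many integer solutions. *)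

(* Defs.v *)
From HB Require Import structures.
From mathcomp Require Import all_boot all_order all_algebra.
Set Implicit Arguments. Unset Strict Implicit. Unset Printing Implicit Defensive.
Import Order.TTheory GRing.Theory Num.Theory.
Local Open Scope ring_scope.

(* The equation (**):
     sum_{i=0}^N A_i (Z_i^5 + Z'_{i+1}^5) = sum_{i=0}^M B_i (W_i^3 + W'_{i+1}^3).
   Convention: Z' i (i : 'I_(N.+1)) stands for Z'_{i+1}; likewise W' i for W'_{i+1}. *)
Definition eqnSol (N M : nat) (A : 'I_N.+1 -> rat) (B : 'I_M.+1 -> rat)
  (Z Z' : 'I_N.+1 -> rat) (W W' : 'I_M.+1 -> rat) : Prop :=
  \sum_(i < N.+1) A i * (Z i ^+ 5 + Z' i ^+ 5)
  = \sum_(i < M.+1) B i * (W i ^+ 3 + W' i ^+ 3).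

Definition intSol (N M : nat) (A : 'I_N.+1 -> rat) (B : 'I_M.+1 -> rat)
  (z z' : 'I_N.+1 -> int) (w w' : 'I_M.+1 -> int) : Prop :=
  eqnSol A B (fun i => (z i)%:~R) (fun i => (z' i)%:~R)
             (fun i => (w i)%:~R) (fun i => (w' i)%:~R).

(* The quartic curve C.  y : 'I_M.+1 -> rat; only y_1..y_M are used
   (the value y ord0 is irrelevant; y_0 is set to v). *)
Definition onC (N M : nat) (A : 'I_N.+1 -> rat) (B : 'I_M.+1 -> rat)
  (x : 'I_N.+1 -> rat) (y : 'I_M.+1 -> rat) (t v : rat) : Prop :=
  v ^+ 2 =
    (\sum_(i < N.+1) A i) / (3 * B ord0) * t ^+ 4
  + (10 * (\sum_(i < N.+1) A i * x i ^+ 2) - \sum_(i < M.+1) B i) / (3 * B ord0) * t ^+ 2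
  + (5 * (\sum_(i < N.+1) A i * x i ^+ 4)
       - 3 * (\sum_(i < M.+1 | i != ord0) B i * y i ^+ 2)) / (3 * B ord0).

Definition yv (M : nat) (y : 'I_M.+1 -> rat) (v : rat) : 'I_M.+1 -> rat :=
  fun i => if i == ord0 then v else y i.

Definition intTuple (N M : nat) : Type :=
  (('I_N.+1 -> int) * ('I_N.+1 -> int) * ('I_M.+1 -> int) * ('I_M.+1 -> int))%type.

(* Main.v *)
Require Import Defs.
From HB Require Import structures.
From mathcomp Require Import all_boot all_order all_algebra.
From mathcomp Require Import ring lra.
Import Order.TTheory GRing.Theory Num.Theory.
Local Open Scope ring_scope.

Definition muOf (N M : nat) (Z Z' : 'I_N.+1 -> rat) (W W' : 'I_M.+1 -> rat) : int :=
  (\prod_(i < N.+1) (denq (Z i) * denq (Z' i))) * \prod_(i < M.+1) (denq (W i) * denq (W' i)).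

Definition scl (mu : int) (k : nat) (q : rat) : int := Num.floor ((mu%:~R) ^+ k * q).

Arguments muOf {N M}.

Lemma muOf_gt0 N M Z Z' W W' : 0 < @muOf N M Z Z' W W'.
Proof.
by rewrite /muOf mulr_gt0 // prodr_gt0 // => i _; rewrite mulr_gt0 ?denq_gt0.
Qed.

Lemma dvd1 N M Z Z' W W' i : (denq (Z i) %| @muOf N M Z Z' W W')%Z.
Proof. rewrite /muOf (bigD1 i) //=. apply: dvdz_mulr; apply: dvdz_mulr; apply: dvdz_mulr; exact: dvdzz. Qed.
Lemma dvd2 N M Z Z' W W' i : (denq (Z' i) %| @muOf N M Z Z' W W')%Z.
Proof. rewrite /muOf (bigD1 i) //=. apply: dvdz_mulr; apply: dvdz_mulr; apply: dvdz_mull; exact: dvdzz. Qed.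
Lemma dvd3 N M Z Z' W W' i : (denq (W i) %| @muOf N M Z Z' W W')%Z.
Proof. rewrite /muOf (bigD1 i) //=. apply: dvdz_mull; apply: dvdz_mulr; apply: dvdz_mulr; exact: dvdzz. Qed.
Lemma dvd4 N M Z Z' W W' i : (denq (W' i) %| @muOf N M Z Z' W W')%Z.
Proof. rewrite /muOf (bigD1 i) //=. apply: dvdz_mull; apply: dvdz_mulr; apply: dvdz_mull; exact: dvdzz. Qed.

Lemma scale_int (q : rat) (m : int) : (denq q %| m)%Z -> (m%:~R * q) \is a Num.int.
Proof.
move/divzK => <-; rewrite intrM -mulrA [_ * q]mulrC -numqE -intrM; exact: intr_int.
Qed.

Lemma scl_ok (q : rat) (m : int) k : (denq q %| m)%Z -> (0 < k)%N ->
  ((scl m k q)%:~R : rat) = (m%:~R) ^+ k * q.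
Proof.
move=> hd; case: k => // k _; rewrite /scl floorK // exprSr -mulrA.
by apply: rpredM; [apply: rpredX; exact: intr_int | exact: scale_int].
Qed.

Lemma eqnSol_ext N M A B (Z1 Z2 Z1' Z2' : 'I_N.+1 -> rat) (W1 W2 W1' W2' : 'I_M.+1 -> rat) :
  (forall i, Z1 i = Z2 i) -> (forall i, Z1' i = Z2' i) ->
  (forall i, W1 i = W2 i) -> (forall i, W1' i = W2' i) ->
  eqnSol A B Z2 Z2' W2 W2' -> eqnSol A B Z1 Z1' W1 W1'.
Proof.
move=> h1 h2 h3 h4; rewrite /eqnSol => H.
rewrite (eq_bigr (fun i => A i * (Z2 i ^+ 5 + Z2' i ^+ 5))); last by move=> i _; rewrite h1 h2.
rewrite H; apply: eq_bigr => i _; by rewrite h3 h4.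
Qed.

Lemma eqnSol_scale N M A B (Z Z' : 'I_N.+1 -> rat) (W W' : 'I_M.+1 -> rat) (m : rat) :
  eqnSol A B Z Z' W W' ->
  eqnSol A B (fun i => m ^+ 3 * Z i) (fun i => m ^+ 3 * Z' i)
             (fun i => m ^+ 5 * W i) (fun i => m ^+ 5 * W' i).
Proof.
rewrite /eqnSol => H.
rewrite (eq_bigr (fun i => m ^+ 15 * (A i * (Z i ^+ 5 + Z' i ^+ 5)))); last by move=> i _; ring.
rewrite -mulr_sumr H mulr_sumr; apply: eq_bigr => i _; ring.
Qed.

Lemma part1 N M (A : 'I_N.+1 -> rat) (B : 'I_M.+1 -> rat)
  (hB0 : B ord0 != 0) (x : 'I_N.+1 -> rat) (y : 'I_M.+1 -> rat) t v :
  onC A B x y t v ->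
  eqnSol A B (fun i => t + x i) (fun i => t - x i)
             (fun i => t + yv y v i) (fun i => t - yv y v i).
Proof.
rewrite /onC /eqnSol => Hv.
set SA := \sum_(i < N.+1) A i; set SA2 := \sum_(i < N.+1) A i * x i ^+ 2.
set SA4 := \sum_(i < N.+1) A i * x i ^+ 4; set SB := \sum_(i < M.+1) B i.
set SBy := \sum_(i < M.+1 | i != ord0) B i * y i ^+ 2.
have -> : \sum_(i < N.+1) A i * ((t + x i) ^+ 5 + (t - x i) ^+ 5)
   = 2 * t ^+ 5 * SA + 20 * t ^+ 3 * SA2 + 10 * t * SA4.
  rewrite /SA /SA2 /SA4 !mulr_sumr -!big_split /=; apply: eq_bigr => i _; ring.
have -> : \sum_(i < M.+1) B i * ((t + yv y v i) ^+ 3 + (t - yv y v i) ^+ 3)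
   = 2 * t ^+ 3 * SB + 6 * t * \sum_(i < M.+1) B i * yv y v i ^+ 2.
  rewrite /SB !mulr_sumr -!big_split /=; apply: eq_bigr => i _; ring.
have -> : \sum_(i < M.+1) B i * yv y v i ^+ 2 = B ord0 * v ^+ 2 + SBy.
  rewrite (bigD1 ord0) //= /yv eqxx; congr (_ + _).
  by apply: eq_bigr => i /negbTE ->.
rewrite Hv /SA /SA2 /SA4 /SB /SBy. move: (\sum_(i < N.+1) A i) (\sum_(i < N.+1) A i * x i ^+ 2) (\sum_(i < N.+1) A i * x i ^+ 4) (\sum_(i < M.+1) B i) (\sum_(i < M.+1 | i != ord0) B i * y i ^+ 2) => a1 a2 a4 b1 b2. field.
exact: hB0.
Qed.

Definition tupOf N M (Z Z' : 'I_N.+1 -> rat) (W W' : 'I_M.+1 -> rat) : intTuple N M :=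
  let mu := muOf Z Z' W W' in
  (fun i => scl mu 3 (Z i), fun i => scl mu 3 (Z' i),
   fun i => scl mu 5 (W i), fun i => scl mu 5 (W' i)).

Arguments tupOf {N M}.

Lemma part2 N M A B (Z Z' : 'I_N.+1 -> rat) (W W' : 'I_M.+1 -> rat) :
  eqnSol A B Z Z' W W' ->
  let p := tupOf Z Z' W W' in intSol A B p.1.1.1 p.1.1.2 p.1.2 p.2.
Proof.
move=> H; rewrite /intSol /tupOf /=.
eapply eqnSol_ext; last exact: (eqnSol_scale _ _ _ _ _ _ _ _ ((muOf Z Z' W W')%:~R : rat) H).
all: move=> i /=;
  apply: scl_ok => //; first [exact: dvd1|exact: dvd2|exact: dvd3|exact: dvd4].
Qed.

Lemma inj_core (m1 m2 t1 t2 v1 v2 : rat) :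
  0 < m1 -> 0 < m2 -> (t1 = t2 -> v1 ^+ 2 = v2 ^+ 2) ->
  m1 ^+ 3 * t1 = m2 ^+ 3 * t2 -> m1 ^+ 5 * t1 = m2 ^+ 5 * t2 ->
  m1 ^+ 5 * v1 = m2 ^+ 5 * v2 -> t1 = t2 /\ v1 = v2.
Proof.
move=> h1 h2 cv ea eb ec.
have n1 : m1 != 0 by rewrite gt_eqF.
have n2 : m2 != 0 by rewrite gt_eqF.
have [/andP [t0 v0]|] := boolP ((t1 == 0) && (v1 == 0)).
  move/eqP: t0 => t0; move/eqP: v0 => v0.
  move: ea ec; rewrite t0 v0 !mulr0 => /esym/eqP; rewrite mulf_eq0 expf_eq0 (negbTE n2) /= => /eqP ->.
  by move/esym/eqP; rewrite mulf_eq0 expf_eq0 (negbTE n2) /= => /eqP ->.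
move=> ntv.
suff mE : m1 = m2.
  subst m2; split; [apply: (mulfI (expf_neq0 3 n1)) | apply: (mulfI (expf_neq0 5 n1))]; done.
have [t0|tn0] := eqVneq t1 0.
  have t20 : t2 = 0.
    by move: ea; rewrite t0 mulr0 => /esym/eqP; rewrite mulf_eq0 expf_eq0 (negbTE n2) /= => /eqP.
  have vv : v1 ^+ 2 = v2 ^+ 2 by apply: cv; rewrite t0 t20.
  have [v0|vn0] := eqVneq v1 0.
    by move: ntv; rewrite t0 v0 eqxx.
  have : m1 ^+ 10 * v1 ^+ 2 = m2 ^+ 10 * v1 ^+ 2.
    rewrite [in RHS]vv.
    have -> : m1 ^+ 10 * v1 ^+ 2 = (m1 ^+ 5 * v1) ^+ 2 by ring.
    by rewrite ec; ring.
  move/(mulIf (expf_neq0 2 vn0))/eqP; rewrite eqrXn2 ?ltW // => /eqP //.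
have : m1 ^+ 2 * (m1 ^+ 3 * t1) = m2 ^+ 2 * (m1 ^+ 3 * t1).
  have -> : m1 ^+ 2 * (m1 ^+ 3 * t1) = m1 ^+ 5 * t1 by ring.
  rewrite eb [in RHS]ea; ring.
move/(mulIf _); rewrite mulf_neq0 ?expf_neq0 // => /(_ isT)/eqP.
by rewrite eqrXn2 ?ltW // => /eqP.
Qed.

Lemma tupOf_spec N M (Z Z' : 'I_N.+1 -> rat) (W W' : 'I_M.+1 -> rat) :
  let p := tupOf Z Z' W W' in let mu : rat := (muOf Z Z' W W')%:~R in
  [/\ forall i, (p.1.1.1 i)%:~R = mu ^+ 3 * Z i,
      forall i, (p.1.1.2 i)%:~R = mu ^+ 3 * Z' i,
      forall i, (p.1.2 i)%:~R = mu ^+ 5 * W i &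
      forall i, (p.2 i)%:~R = mu ^+ 5 * W' i].
Proof.
rewrite /tupOf /=; split => i; apply: scl_ok => //;
  first [exact: dvd1|exact: dvd2|exact: dvd3|exact: dvd4].
Qed.

Lemma lin_test (a b c d x : rat) : a * (b + x) = c * (d + x) -> a * (b - x) = c * (d - x) -> a * b = c * d.
Proof. move=> h1 h2. lra. Qed.

Arguments tupOf_spec {N M}.
Arguments part1 {N M A B} hB0 {x y t v}.
Arguments part2 {N M A B Z Z' W W'}.
Arguments inj_core {m1 m2 t1 t2 v1 v2}.

Theorem mainTheorem2 (N M : nat) (A : 'I_N.+1 -> rat) (B : 'I_M.+1 -> rat)
  (hB0 : B ord0 != 0) (x : 'I_N.+1 -> rat) (y : 'I_M.+1 -> rat) :
  (* (1) rational points of C give rational solutions *)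
  (forall t v : rat, onC A B x y t v ->
     eqnSol A B (fun i => t + x i) (fun i => t - x i)
                (fun i => t + yv y v i) (fun i => t - yv y v i))
  /\
  (* (2) weighted scaling of a rational solution gives an integer solution *)
  (forall (Z Z' : 'I_N.+1 -> rat) (W W' : 'I_M.+1 -> rat),
     eqnSol A B Z Z' W W' ->
     exists mu : int, mu != 0 /\
       exists (z z' : 'I_N.+1 -> int) (w w' : 'I_M.+1 -> int),
         (forall i, (z i)%:~R = (mu%:~R) ^+ 3 * Z i) /\
         (forall i, (z' i)%:~R = (mu%:~R) ^+ 3 * Z' i) /\
         (forall i, (w i)%:~R = (mu%:~R) ^+ 5 * W i) /\
         (forall i, (w' i)%:~R = (mu%:~R) ^+ 5 * W' i) /\
         intSol A B z z' w w')
  /\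
  (* (3) infinitely many rational points on C => infinitely many integer solutions *)
  ((exists g : nat -> rat * rat, injective g /\
      forall n, onC A B x y (g n).1 (g n).2) ->
   exists f : nat -> intTuple N M, injective f /\
      forall n, intSol A B (f n).1.1.1 (f n).1.1.2 (f n).1.2 (f n).2).
Proof.
split; first by move=> t v H; exact: (part1 hB0 H).
split.
  move=> Z Z' W W' H; exists (muOf Z Z' W W'); split; first by rewrite gt_eqF // muOf_gt0.
  have [s1 s2 s3 s4] := tupOf_spec Z Z' W W'.
  exists (tupOf Z Z' W W').1.1.1, (tupOf Z Z' W W').1.1.2,
         (tupOf Z Z' W W').1.2, (tupOf Z Z' W W').2.
  by split=> //; split=> //; split=> //; split=> //; exact: part2.
case=> g [ginj Hg].
pose sol n := (fun i => (g n).1 + x i, fun i => (g n).1 - x i,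
               fun i => (g n).1 + yv y (g n).2 i, fun i => (g n).1 - yv y (g n).2 i).
exists (fun n => tupOf (sol n).1.1.1 (sol n).1.1.2 (sol n).1.2 (sol n).2).
split; last first.
  move=> n; apply: part2; rewrite /sol /=; exact: (part1 hB0 (Hg n)).
move=> n m E.
have [a1 a2 a3 a4] := tupOf_spec (sol n).1.1.1 (sol n).1.1.2 (sol n).1.2 (sol n).2.
have [b1 b2 b3 b4] := tupOf_spec (sol m).1.1.1 (sol m).1.1.2 (sol m).1.2 (sol m).2.
have E1 := congr1 (fun p : intTuple N M => (p.1.1.1 ord0)%:~R : rat) E.
have E2 := congr1 (fun p : intTuple N M => (p.1.1.2 ord0)%:~R : rat) E.
have E3 := congr1 (fun p : intTuple N M => (p.1.2 ord0)%:~R : rat) E.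
have E4 := congr1 (fun p : intTuple N M => (p.2 ord0)%:~R : rat) E.
rewrite /= in E1 E2 E3 E4.
rewrite a1 b1 in E1; rewrite a2 b2 in E2; rewrite a3 b3 in E3; rewrite a4 b4 in E4.
move: E1 E2 E3 E4; rewrite /sol /yv /=.
set m1 : rat := (muOf _ _ _ _)%:~R.
set m2 : rat := (muOf _ _ _ _)%:~R.
move=> E1 E2 E3 E4.
have p1 : 0 < m1 by rewrite /m1 ltr0z muOf_gt0.
have p2 : 0 < m2 by rewrite /m2 ltr0z muOf_gt0.
have ea : m1 ^+ 3 * (g n).1 = m2 ^+ 3 * (g m).1 by lra.
have eb : m1 ^+ 5 * (g n).1 = m2 ^+ 5 * (g m).1 by lra.
have ec : m1 ^+ 5 * (g n).2 = m2 ^+ 5 * (g m).2 by lra.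
have cv : (g n).1 = (g m).1 -> (g n).2 ^+ 2 = (g m).2 ^+ 2.
  by move=> e; rewrite (Hg n) (Hg m) e.
have [et ev] := inj_core p1 p2 cv ea eb ec.
apply: ginj; rewrite [g n]surjective_pairing [g m]surjective_pairing et ev //.
Qed.
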